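(* Let $x\in\mathbb{R}^{w\times h}$ be a sample with true label $y_0$, let $\mathbb{P}$ be a set of patch regions, let $\mathbb{M}_{\mathbb{P}}$ be a covering mask set for $\mathbb{P}$, and let $\tau\in[0,1]$. Suppose $$\max\{f_{\mathrm{conf}}(x_{\mathrm{M}}) : \mathrm{M}\in\mathbb{M}_{\mathbb{P}},\ f(x_{\mathrm{M}})\neq y_0\}<\tau .$$ Then for every $x'\in\mathbb{A}_{\mathbb{P}}(x)$ with $f(x')\neq y_0$, at least one of the following holds: (i) $\{x'_{\mathrm{M}} : \mathrm{M}\in\mathbb{M}_{\mathbb{P}},\ f(x'_{\mathrm{M}})\neq f(x')\}\neq\emptyset$; (ii) $\min\{f_{\mathrm{conf}}(x'_{\mathrm{M}}) : \mathrm{M}\in\mathbb{M}_{\mathbb{P}},\ f(x'_{\mathrm{M}})= f(x')\}<\tau$. Equivalently, in terms of the HiCert functions $v,w$ defined in the context: $v(x)$ implies that $w(x')$ holds for every $x'\in\mathbb{A}_{\mathbb{P}}(x)$ with $f(x')\neq y_0$.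
   Context: Samples are real matrices in $\mathbb{R}^{w\times h}$; $J$ is the all-ones matrix, and $+,-,\odot$ are entrywise. A classifier is a function $f:\mathbb{R}^{w\times h}\to\mathcal{Y}$ ($\mathcal{Y}$ a finite label set) together with a confidence function $f_{\mathrm{conf}}:\mathbb{R}^{w\times h}\to(0,1)$. A patch region is $\mathrm{P}\in\{0,1\}^{w\times h}$; $\mathbb{P}$ is a set of patch regions. The attack constraint set of $x$ is $\mathbb{A}_{\mathbb{P}}(x)=\{x'' : \exists\,\mathrm{P}\in\mathbb{P},\ x''=(J-\mathrm{P})\odot x+\mathrm{P}\odot x''\}$. A mask is $\mathrm{M}\in\{0,1\}^{w\times h}$, and the mutant of $\hat x$ for $\mathrm{M}$ is $\hat x_{\mathrm{M}}=(J-\mathrm{M})\odot\hat x$. A covering mask set for $\mathbb{P}$ is a finite set of masks $\mathbb{M}_{\mathbb{P}}$ such that for every $\mathrm{P}\in\mathbb{P}$ there is $\mathrm{M}\in\mathbb{M}_{\mathbb{P}}$ with $\mathrm{P}\odot\mathrm{M}=\mathrm{P}$. Conventions: $\max\emptyset=-\infty$, $\min\emptyset=+\infty$. HiCert's certification function is $v(x):=[\max\{f_{\mathrm{conf}}(x_{\mathrm{M}}):\mathrm{M}\in\mathbb{M}_{\mathbb{P}}, f(x_{\mathrm{M}})\neq y_0\}<\tau]$ (with $y_0$ the true label of $x$), and its warning function is $w(\hat x):=[\{\hat x_{\mathrm{M}}:\mathrm{M}\in\mathbb{M}_{\mathbb{P}}, f(\hat x_{\mathrm{M}})\neq f(\hat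 x)\}\neq\emptyset]\lor[\min\{f_{\mathrm{conf}}(\hat x_{\mathrm{M}}):\mathrm{M}\in\mathbb{M}_{\mathbb{P}}, f(\hat x_{\mathrm{M}})=f(\hat x)\}<\tau]$. *)

(* Defs.v *)
From HB Require Import structures.
From mathcomp Require Import all_boot all_order all_algebra.
From mathcomp Require Import all_classical all_reals ereal.
Set Implicit Arguments. Unset Strict Implicit. Unset Printing Implicit Defensive.
Import Order.TTheory GRing.Theory Num.Theory.
Local Open Scope ring_scope.
Local Open Scope classical_set_scope.

Section HiCert.
Variables (R : realType) (w h : nat).

(* samples are real w x h matrices; patch regions / masks are {0,1}-matrices,
   represented as boolean matrices and cast to 0/1 real matrices. *)
Definition sample := 'M[R]_(w, h).
Definition region := 'M[bool]_(w, h).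

Definition J : sample := const_mx 1.
Definition toR (P : region) : sample := map_mx (fun b : bool => (b%:R : R)) P.
Definition hadamard (A B : sample) : sample := map2_mx (fun a b => a * b) A B.

Definition attack_set (PP : {set region}) (x : sample) : set sample :=
  [set x'' | exists2 P, P \in PP &
     x'' = hadamard (J - toR P) x + hadamard (toR P) x''].

Definition mutant (M : region) (xh : sample) : sample := hadamard (J - toR M) xh.

Definition covering (PP MM : {set region}) : Prop :=
  forall P, P \in PP -> exists2 M, M \in MM & hadamard (toR P) (toR M) = toR P.

Variables (Y : finType) (f : sample -> Y) (fconf : sample -> R).

(* max over empty = -oo, min over empty = +oo *)
Definition maxconf_wrong (MM : {set region}) (x : sample) (y0 : Y) : \bar R :=
  \big[Order.max/-oo%E]_(M in MM | f (mutant M x) != y0) (fconf (mutant M x))%:E.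

Definition minconf_same (MM : {set region}) (xh : sample) : \bar R :=
  \big[Order.min/+oo%E]_(M in MM | f (mutant M xh) == f xh) (fconf (mutant M xh))%:E.

Definition certify (MM : {set region}) (tau : R) (x : sample) (y0 : Y) : Prop :=
  (maxconf_wrong MM x y0 < tau%:E)%E.

Definition warn (MM : {set region}) (tau : R) (xh : sample) : Prop :=
  [set mutant M xh | M in [set M | M \in MM /\ f (mutant M xh) != f xh]] != set0
  \/ (minconf_same MM xh < tau%:E)%E.

End HiCert.

(* Main.v *)
Require Import Defs.
From HB Require Import structures.
From mathcomp Require Import all_boot all_order all_algebra.
From mathcomp Require Import all_classical all_reals ereal.
Import Order.TTheory GRing.Theory Num.Theory.
Local Open Scope ring_scope.
Local Open Scope classical_set_scope.

Lemma bigmax_ge_helper (R : realType) (I:finType) (F : I -> \bar R) (P : pred I) i :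
  P i -> (F i <= \big[Order.max/-oo%E]_(j | P j) F j)%E.
Proof. move=> Pi. rewrite (bigD1 i) //=. by rewrite le_max lexx. Qed.

Lemma bigmin_le_helper (R : realType) (I:finType) (F : I -> \bar R) (P : pred I) i :
  P i -> (\big[Order.min/+oo%E]_(j | P j) F j <= F i)%E.
Proof. move=> Pi. rewrite (bigD1 i) //=. by rewrite ge_min lexx. Qed.

Theorem theorem2 (R : realType) (w h : nat) (Y : finType)
  (f : 'M[R]_(w, h) -> Y) (fconf : 'M[R]_(w, h) -> R)
  (hconf : forall z, 0 < fconf z < 1)
  (PP MM : {set 'M[bool]_(w, h)}) (hcov : @covering R w h PP MM)
  (tau : R) (htau : 0 <= tau <= 1)
  (x : 'M[R]_(w, h)) (y0 : Y) :
  certify f fconf MM tau x y0 ->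
  forall x' : 'M[R]_(w, h), x' \in attack_set PP x -> f x' != y0 ->
    warn f fconf MM tau x'.
Proof.
move=> hcert x' /set_mem [P PP_P Hx'] fx'.
have [M MM_M HPM] := hcov P PP_P.
have Hmut : mutant M x' = mutant M x.
  apply/matrixP => i j.
  have Ei := congr1 (fun A : 'M[R]_(w,h) => A i j) Hx'.
  have EPM := congr1 (fun A : 'M[R]_(w,h) => A i j) HPM.
  move: Ei EPM; rewrite /mutant /hadamard /toR /J !mxE.
  case: (P i j); case: (M i j) => /= E1 E2; rewrite ?mul1r ?mul0r ?subrr ?subr0 ?add0r ?addr0 in E1 E2 *.
  all: try by rewrite !mul0r.
  all: try by rewrite E1 !mul1r.
  by move/eqP: E2; rewrite eq_sym oner_eq0.
case: (eqVneq (f (mutant M x')) (f x')) => Hf; last first.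
  left; apply/set0P; exists (mutant M x'); exists M => //; split => //.
right.
rewrite /minconf_same.
have H1 := @bigmin_le_helper R _ (fun M => (fconf (mutant M x'))%:E)
   (fun M => (M \in MM) && (f (mutant M x') == f x')) M.
rewrite MM_M Hf /= in H1; have {}H1 := H1 (eqxx _).
apply: le_lt_trans H1 _.
rewrite Hmut; apply: le_lt_trans hcert.
rewrite /maxconf_wrong.
have H2 := @bigmax_ge_helper R _ (fun M => (fconf (mutant M x))%:E)
   (fun M => (M \in MM) && (f (mutant M x) != y0)) M.
have cond : (M \in MM) && (f (mutant M x) != y0) by rewrite MM_M -Hmut Hf.
exact: H2 cond.
Qed.
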